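(* Let $\mathcal{U}$ be a set of optimization problems equipped with a binary relation $\subseteq_{\mathcal{S}}$ (''is a subproblem of'') that is transitive: for all $\mathcal{P}_1,\mathcal{P}_2,\mathcal{P}_3\in\mathcal{U}$, if $\mathcal{P}_1\subseteq_{\mathcal{S}}\mathcal{P}_2$ and $\mathcal{P}_2\subseteq_{\mathcal{S}}\mathcal{P}_3$ then $\mathcal{P}_1\subseteq_{\mathcal{S}}\mathcal{P}_3$. Let $\mathbb{T}$ be a finite rooted tree whose nodes are labelled by problems in $\mathcal{U}$, whose root $\mathcal{R}$ satisfies $\mathcal{R}\subseteq_{\mathcal{S}}\mathcal{P}$ for every $\mathcal{P}\in\mathcal{U}$, and which is subproblem order-preserving, i.e. whenever node $\mathcal{P}_i$ is an ancestor of node $\mathcal{P}_j$, we have $\mathcal{P}_i\subseteq_{\mathcal{S}}\mathcal{P}_j$. Let $\mathcal{P}\in\mathcal{U}$ be a new problem, and let $\mathcal{P}^{(M)}$ be the node obtained by the following search: start at the current node $\mathcal{N}=\mathcal{R}$; while some child $\mathcal{Q}$ of $\mathcal{N}$ satisfies $\mathcal{Q}\subseteq_{\mathcal{S}}\mathcal{P}$, move $\mathcal{N}$ to one such child; when no child of $\mathcal{N}$ satisfies this, set $\mathcal{P}^{(M)}=\mathcal{N}$. Form the tree $\mathbb{T}'$ by inserting $\mathcal{P}$ as a new child of $\mathcal{P}^{(M)}$, and, for each child $\mathcal{P}^{(M)}_k$ of $\mathcal{P}^{(M)}$ in $\mathbb{T}$: if $\mathcal{P}\subseteq_{\mathcal{S}}\mathcal{P}^{(M)}_k$,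 re-attach $\mathcal{P}^{(M)}_k$ (with its subtree) as a child of $\mathcal{P}$; otherwise leave $\mathcal{P}^{(M)}_k$ as a child of $\mathcal{P}^{(M)}$ (a sibling of $\mathcal{P}$). Then $\mathbb{T}'$ is again subproblem order-preserving. Consequently, any sequence of such insertions starting from the tree consisting only of the root preserves the subproblem order-preserving property.
   Context: In the paper, problems are operations-research optimization problems and $\tilde{\mathcal{P}}\subseteq_{\mathcal{S}}\mathcal{P}$ means $\tilde{\mathcal{P}}$ is a subproblem of $\mathcal{P}$ (its optimization model is obtained from that of $\mathcal{P}$ by keeping a subset of the variables, the part of the objective depending only on them, and some of the constraints restricted to them); the paper asserts this relation is transitive. The root of the ''modeling tree'' is an abstract problem class of which every problem is regarded as a subproblem-extension. A modeling tree is called subproblem order-preserving if every ancestor node's problem is a subproblem of every descendant node's problem. The update procedure is the tree search followed by node insertion described in the claim. *)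

(* Defs.v *)
From Stdlib Require Import List Permutation.
Import ListNotations.

Inductive tree (U : Type) : Type :=
  | Node : U -> list (tree U) -> tree U.
Arguments Node {U} _ _.

Definition label {U : Type} (t : tree U) : U :=
  match t with Node x _ => x end.

Inductive subtree {U : Type} : tree U -> tree U -> Prop :=
  | subtree_refl : forall t, subtree t t
  | subtree_child : forall s c x ts, In c ts -> subtree s c -> subtree s (Node x ts).

Definition node_of {U : Type} (y : U) (t : tree U) : Prop :=
  exists ts, subtree (Node y ts) t.

Definition ancestor {U : Type} (t : tree U) (x y : U) : Prop :=
  exists ts c, subtree (Node x ts) t /\ In c ts /\ node_of y c.

Definition order_preserving {U : Type} (S : U -> U -> Prop) (t : tree U) : Prop :=
  forall x y, ancestor t x y -> S x y.

(* The order of children is irrelevant (up to permutation). *)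
Inductive insert_step {U : Type} (S : U -> U -> Prop) (P : U) :
    tree U -> tree U -> Prop :=
  | insert_here : forall x ts A B,
      Forall (fun c => ~ S (label c) P) ts ->
      Permutation (A ++ B) ts ->
      Forall (fun c => S P (label c)) A ->
      Forall (fun c => ~ S P (label c)) B ->
      insert_step S P (Node x ts) (Node x (Node P A :: B))
  | insert_descend : forall x l1 c c' l2,
      S (label c) P ->
      insert_step S P c c' ->
      insert_step S P (Node x (l1 ++ c :: l2)) (Node x (l1 ++ c' :: l2)).

Inductive reachable {U : Type} (S : U -> U -> Prop) (R : U) : tree U -> Prop :=
  | reach_root : reachable S R (Node R [])
  | reach_insert : forall t P t', reachable S R t -> insert_step S P t t' ->
      reachable S R t'.

(* Main.v *)
Require Import Defs.
From Stdlib Require Import List Permutation.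
Import ListNotations.

Section Aux.
Context {U : Type}.

Lemma node_of_inv (y x : U) ts : node_of y (Node x ts) ->
  y = x \/ exists c, In c ts /\ node_of y c.
Proof.
  intros [us H]. inversion H; subst.
  - left; reflexivity.
  - right. exists c. split; [assumption | exists us; assumption].
Qed.

Lemma node_of_child (y x : U) ts c : In c ts -> node_of y c -> node_of y (Node x ts).
Proof. intros Hin [us H]. exists us. eapply subtree_child; eauto. Qed.

Lemma node_of_root (x : U) ts : node_of x (Node x ts).
Proof. exists ts. constructor. Qed.

Lemma anc_inv (x a b : U) ts : ancestor (Node x ts) a b ->
  (a = x /\ exists c, In c ts /\ node_of b c) \/ exists c, In c ts /\ ancestor c a b.
Proof.
  intros [us [d [Hs [Hin Hn]]]]. inversion Hs; subst.
  - left. split; [reflexivity|]. exists d; auto.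
  - right. exists c. split; [assumption|]. exists us, d; auto.
Qed.

Lemma anc_child (x a b : U) ts c : In c ts -> ancestor c a b -> ancestor (Node x ts) a b.
Proof.
  intros Hin [us [d [Hs [Hd Hn]]]]. exists us, d. split; [|auto].
  eapply subtree_child; eauto.
Qed.

Lemma anc_root (x b : U) ts c : In c ts -> node_of b c -> ancestor (Node x ts) x b.
Proof. intros Hin Hn. exists ts, c. split; [constructor|auto]. Qed.

Lemma node_anc (b : U) d : node_of b d -> b = label d \/ ancestor d (label d) b.
Proof.
  destruct d as [y ds]. intros H. apply node_of_inv in H as [H|[c [Hc Hn]]].
  - left; auto.
  - right. simpl. eapply anc_root; eauto.
Qed.

Lemma insert_label S (P : U) t t' : insert_step S P t t' -> label t' = label t.
Proof. intros H; destruct H; reflexivity. Qed.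

Lemma in_repl (d c c' : tree U) l1 l2 : In d (l1 ++ c' :: l2) -> d = c' \/ In d (l1 ++ c :: l2).
Proof.
  intros H. apply in_app_iff in H as [H|[H|H]].
  - right; apply in_app_iff; auto.
  - left; auto.
  - right; apply in_app_iff; right; right; auto.
Qed.

Lemma in_mid (c : tree U) l1 l2 : In c (l1 ++ c :: l2).
Proof. apply in_app_iff; right; left; auto. Qed.

Lemma insert_nodes S (P : U) t t' : insert_step S P t t' ->
  forall y, node_of y t' -> node_of y t \/ y = P.
Proof.
  induction 1; intros y Hy.
  - apply node_of_inv in Hy as [Hy|[d [Hd Hn]]].
    + subst; left; apply node_of_root.
    + destruct Hd as [Hd|Hd].
      * subst. apply node_of_inv in Hn as [Hn|[e [He Hn]]]; [right; auto|].
        left. eapply node_of_child; [|eauto].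
        eapply Permutation_in; [eauto|]. apply in_app_iff; auto.
      * left. eapply node_of_child; [|eauto].
        eapply Permutation_in; [eauto|]. apply in_app_iff; auto.
  - apply node_of_inv in Hy as [Hy|[d [Hd Hn]]].
    + subst; left; apply node_of_root.
    + apply (in_repl _ c) in Hd as [Hd|Hd].
      * subst. destruct (IHinsert_step _ Hn) as [H1|H1]; [|right; auto].
        left. eapply node_of_child; [apply in_mid|eauto].
      * left. eapply node_of_child; eauto.
Qed.

Lemma main S (S_trans : forall P1 P2 P3 : U, S P1 P2 -> S P2 P3 -> S P1 P3) P t t' :
  insert_step S P t t' -> S (label t) P -> order_preserving S t -> order_preserving S t'.
Proof.
  induction 1 as [x ts A B Hno Hperm HA HB | x l1 c c' l2 Hc Hins IH];
    simpl; intros Hx Ht a b Hab.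
  - assert (Hts : forall d, In d A \/ In d B -> In d ts).
    { intros d Hd. eapply Permutation_in; [eauto|]. apply in_app_iff; auto. }
    apply anc_inv in Hab as [[-> [d [Hd Hn]]]|[d [Hd Hn]]].
    + destruct Hd as [Hd|Hd].
      * subst. apply node_of_inv in Hn as [Hn|[e [He Hn]]]; [subst; auto|].
        apply Ht. eapply anc_root; [apply Hts; left; eauto|eauto].
      * apply Ht. eapply anc_root; [apply Hts; right; eauto|eauto].
    + destruct Hd as [Hd|Hd].
      * subst. apply anc_inv in Hn as [[-> [e [He Hn]]]|[e [He Hn]]].
        -- assert (HPe : S P (label e)) by (rewrite Forall_forall in HA; auto).
           apply node_anc in Hn as [Hn|Hn]; [subst; auto|].
           eapply S_trans; [eauto|]. apply Ht. eapply anc_child; [apply Hts; left; eauto|eauto].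
        -- apply Ht. eapply anc_child; [apply Hts; left; eauto|eauto].
      * apply Ht. eapply anc_child; [apply Hts; right; eauto|eauto].
  - apply anc_inv in Hab as [[-> [d [Hd Hn]]]|[d [Hd Hn]]].
    + apply (in_repl _ c) in Hd as [Hd|Hd].
      * subst. destruct (insert_nodes _ _ _ _ Hins _ Hn) as [H1|H1].
        -- apply Ht. eapply anc_root; [apply in_mid|eauto].
        -- subst; auto.
      * apply Ht. eapply anc_root; eauto.
    + apply (in_repl _ c) in Hd as [Hd|Hd].
      * subst. eapply IH; eauto.
        intros u v Huv. apply Ht. eapply anc_child; [apply in_mid|eauto].
      * apply Ht. eapply anc_child; eauto.
Qed.

End Aux.

Theorem proposition1 (U : Type) (S : U -> U -> Prop)
  (S_trans : forall P1 P2 P3, S P1 P2 -> S P2 P3 -> S P1 P3)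
  (R : U) (R_min : forall P, S R P) :
  (forall (t t' : tree U) (P : U),
      label t = R ->
      order_preserving S t ->
      insert_step S P t t' ->
      order_preserving S t')
  /\
  (forall t : tree U, reachable S R t -> order_preserving S t).
Proof.
  assert (H1 : forall (t t' : tree U) (P : U),
      label t = R -> order_preserving S t -> insert_step S P t t' -> order_preserving S t').
  { intros t t' P Hl Ho Hi. eapply main; eauto. rewrite Hl; auto. }
  split; [exact H1|].
  assert (H2 : forall t, reachable S R t -> label t = R /\ order_preserving S t).
  { induction 1 as [|t P t' Hr IHr Hi].
    - split; [reflexivity|]. intros a b Hab.
      apply anc_inv in Hab as [[_ [d [[] _]]]|[d [[] _]]].
    - destruct IHr as [Hl Ho]. split.
      + rewrite (insert_label _ _ _ _ Hi); auto.
      + eapply H1; eauto. }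
  intros t Ht; apply H2; auto.
Qed.
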